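(* Let $\Gamma$ be a finite graph with right angled Artin group $R(\Gamma)$. If $m(R(\Gamma))\le 3$, then $\Gamma$ contains no induced subgraph isomorphic to a 4-cycle (square).
   Context: For a finite simple graph $\Gamma$, $R(\Gamma)$ is the group with one generator per vertex and relations that generators of adjacent vertices commute. $m(G)$ is the minimal $d$ such that $G$ embeds in $GL(d,\mathbb{F})$ for some field $\mathbb{F}$ ($\infty$ if none). *)

(* Defs.v *)
From HB Require Import structures.
From mathcomp Require Import all_boot all_order all_algebra.
From Stdlib Require Import Relation_Operators.
Set Implicit Arguments. Unset Strict Implicit. Unset Printing Implicit Defensive.
Import GRing.Theory.
Local Open Scope ring_scope.

Definition simple_graph (T : finType) (e : rel T) : Prop :=
  symmetric e /\ irreflexive e.

(* Words in the generators of R(Gamma) and their inverses: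
   (x, true) = generator x, (x, false) = its inverse. *)
Definition raag_word (T : finType) := seq (T * bool).

Inductive raag_step (T : finType) (e : rel T) :
    raag_word T -> raag_word T -> Prop :=
  | raag_cancel (s t : raag_word T) (x : T) (b : bool) :
      raag_step e (s ++ [:: (x, b); (x, ~~ b)] ++ t) (s ++ t)
  | raag_commute (s t : raag_word T) (x y : T) (b c : bool) :
      e x y ->
      raag_step e (s ++ [:: (x, b); (y, c)] ++ t) (s ++ [:: (y, c); (x, b)] ++ t).

Definition raag_eq (T : finType) (e : rel T) : raag_word T -> raag_word T -> Prop :=
  clos_refl_sym_trans _ (raag_step e).

Definition mx_eval (F : fieldType) (d : nat) (T : finType)
    (A : T -> 'M[F]_d) (w : raag_word T) : 'M[F]_d :=
  foldr (fun p M => (if p.2 then A p.1 else invmx (A p.1)) *m M) 1%:M w.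

(* R(Gamma) embeds in GL(d, F): an assignment of invertible matrices to the
   vertices such that adjacent vertices go to commuting matrices (hence a
   homomorphism R(Gamma) -> GL(d,F)), whose kernel is trivial. *)
Definition raag_embeds_GL (T : finType) (e : rel T) (F : fieldType) (d : nat) : Prop :=
  exists A : T -> 'M[F]_d,
    [/\ forall x, A x \in unitmx,
        forall x y, e x y -> A x *m A y = A y *m A x
      & forall w : raag_word T, mx_eval A w = 1%:M -> raag_eq e w [::]].

Definition raag_m_le (T : finType) (e : rel T) (n : nat) : Prop :=
  exists (d : nat) (F : fieldType), (d <= n)%N /\ raag_embeds_GL e F d.

Definition has_induced_square (T : finType) (e : rel T) : Prop :=
  exists a b c d : T,
    [/\ uniq [:: a; b; c; d],
        [&& e a b, e b c, e c d & e d a]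
      & ~~ e a c && ~~ e b d].

(* Main.v *)
Require Import Defs.
From HB Require Import structures.
From mathcomp Require Import all_boot all_order all_algebra.
From mathcomp Require Import zify ring.
From Stdlib Require Import Relation_Operators Classical.
Set Implicit Arguments. Unset Strict Implicit. Unset Printing Implicit Defensive.
Import GRing.Theory.


Definition tabf (s : seq nat) (i : nat) : nat := nth i s i.
Definition sig0 := [:: 0; 1; 3; 2]%N.
Definition tau0 := [:: 1; 2; 0; 3]%N.
Definition tau0i := [:: 2; 0; 1; 3]%N.

Lemma tab_inv s s' : size s = 4%N -> size s' = 4%N ->
  (tabf s (tabf s' 0) = 0 /\ tabf s (tabf s' 1) = 1 /\ tabf s (tabf s' 2) = 2 /\ tabf s (tabf s' 3) = 3)%N ->
  forall j, tabf s (tabf s' j) = j.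
Proof.
move=> hs hs' [h0 [h1 [h2 h3]]] j.
case: (ltnP j 4) => hj.
  by do 4?(case: j hj => [|j] hj) => //.
by rewrite /tabf !nth_default // ?hs ?hs' // /tabf nth_default // hs'.
Qed.

Lemma sig0K j : tabf sig0 (tabf sig0 j) = j. Proof. by apply: tab_inv. Qed.
Lemma tau0K j : tabf tau0 (tabf tau0i j) = j. Proof. by apply: tab_inv. Qed.
Lemma tau0iK j : tabf tau0i (tabf tau0 j) = j. Proof. by apply: tab_inv. Qed.

Section PE.
Variables (T : finType) (e : rel T) (a c : T).
Hypothesis irr : irreflexive e.
Hypothesis ac : ~~ e a c.
Hypothesis ca : ~~ e c a.
Hypothesis neq : a != c.

Definition letf (p : T * bool) : nat -> nat :=
  if p.1 == a then tabf sig0 else if p.1 == c then (if p.2 then tabf tau0 else tabf tau0i) else id.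

Definition pe (w : raag_word T) (i : nat) : nat := foldr (fun p k => letf p k) i w.

Lemma pe_cat s t i : pe (s ++ t) i = pe s (pe t i).
Proof. by rewrite /pe foldr_cat. Qed.

Lemma letf_cancel x b j : letf (x, b) (letf (x, ~~ b) j) = j.
Proof.
rewrite /letf /=; case: eqP => _; first exact: sig0K.
by case: eqP => _ //; case: b => /=; [exact: tau0K | exact: tau0iK].
Qed.

Lemma letf_comm x y b b' j : e x y -> letf (x, b) (letf (y, b') j) = letf (y, b') (letf (x, b) j).
Proof.
move=> exy; rewrite /letf /=.
have nxx : x != y by apply/eqP => xy; subst; rewrite irr in exy.
case: (x =P a) => [xa|xa]; case: (y =P a) => [ya|ya] //.
- case: (y =P c) => [yc|yc] //; by subst; rewrite (negbTE ac) in exy.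
- case: (x =P c) => [xc|xc] //; by subst; rewrite (negbTE ca) in exy.
- case: (x =P c) => [xc|xc]; case: (y =P c) => [yc|yc] //.
  by subst; rewrite eqxx in nxx.
Qed.

Lemma pe_step w w' : raag_step e w w' -> forall i, pe w i = pe w' i.
Proof.
case=> [s t x b | s t x y b b' exy] i; rewrite !pe_cat /=.
  by rewrite letf_cancel.
by rewrite letf_comm.
Qed.

Lemma pe_eq w w' : raag_eq e w w' -> forall i, pe w i = pe w' i.
Proof.
elim=> {w w'} [w w' /pe_step //| w i //| w w' _ IH i| w w' w'' _ IH1 _ IH2 i].
  by rewrite IH.
by rewrite IH1 IH2.
Qed.

Definition commw (x y : T) : raag_word T := [:: (x, true); (y, true); (x, false); (y, false)].
Definition W2w (x y : T) : raag_word T :=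
  [:: (x, true); (y, true); (x, false); (y, false)] ++
  [:: (x, true); (y, false); (x, false); (y, true)] ++
  [:: (y, true); (x, true); (y, false); (x, false)] ++
  [:: (y, false); (x, true); (y, true); (x, false)].

Lemma commw_nontriv : ~ raag_eq e (commw a c) [::].
Proof.
move=> /pe_eq /(_ 0%N); rewrite /pe /= /letf /= eqxx.
have -> : (c == a) = false by rewrite eq_sym (negbTE neq).
by rewrite eqxx.
Qed.

Lemma W2w_nontriv : ~ raag_eq e (W2w a c) [::].
Proof.
move=> /pe_eq /(_ 0%N); rewrite /pe /= /letf /= eqxx.
have -> : (c == a) = false by rewrite eq_sym (negbTE neq).
by rewrite eqxx.
Qed.
End PE.

Local Open Scope ring_scope.


Section Eval.
Variables (F : fieldType) (n : nat) (T : finType) (e : rel T) (A : T -> 'M[F]_n).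

Lemma mx_eval_cons p w : mx_eval A (p :: w) = (if p.2 then A p.1 else invmx (A p.1)) *m mx_eval A w.
Proof. by []. Qed.

Lemma mx_eval_cat s t : mx_eval A (s ++ t) = mx_eval A s *m mx_eval A t.
Proof.
elim: s => [|p s IH] /=; first by rewrite mul1mx.
by rewrite /mx_eval /= -/(mx_eval A (s ++ t)) -/(mx_eval A s) IH mulmxA.
Qed.

Lemma inv_uniq (X Y : 'M[F]_n) : X *m Y = 1%:M -> invmx X = Y.
Proof.
move=> h; have [uX _] := mulmx1_unit h.
by rewrite -[RHS](mulKmx uX) h mulmx1.
Qed.

Lemma comm_inv (X Y : 'M[F]_n) : Y \in unitmx -> X *m Y = Y *m X -> X *m invmx Y = invmx Y *m X.
Proof.
move=> uY h.
have := congr1 (fun M => invmx Y *m M *m invmx Y) h => /=.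
by rewrite mulKmx // -!mulmxA mulmxV // mulmx1 => ->.
Qed.

Hypothesis Aunit : forall x, A x \in unitmx.
Hypothesis Acomm : forall x y, e x y -> A x *m A y = A y *m A x.

Lemma letter_comm x y b b' : e x y ->
  (if b then A x else invmx (A x)) *m (if b' then A y else invmx (A y)) =
  (if b' then A y else invmx (A y)) *m (if b then A x else invmx (A x)).
Proof.
move=> exy; have h := Acomm exy.
have h2 := esym (comm_inv (Aunit x) (esym h)).
case: b; case: b' => //.
- exact: comm_inv.
- exact: comm_inv.
Qed.

Lemma mx_eval_step w w' : raag_step e w w' -> mx_eval A w = mx_eval A w'.
Proof.
case=> [s t x b | s t x y b b' exy]; rewrite !mx_eval_cat !mx_eval_cons /=.
  congr (_ *m _); rewrite mulmx1; case: b => /=.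
    by rewrite mulmxV // mul1mx.
  by rewrite mulVmx // mul1mx.
congr (_ *m _); rewrite !mulmx1; congr (_ *m _).
exact: letter_comm.
Qed.

Lemma mx_eval_eq w w' : raag_eq e w w' -> mx_eval A w = mx_eval A w'.
Proof.
elim=> {w w'} [w w' /mx_eval_step //| w //| w w' _ IH| w w' w'' _ IH1 _ IH2].
  by rewrite IH.
by rewrite IH1 IH2.
Qed.
End Eval.

Section Embed.
Variables (F : fieldType) (T : finType) (e : rel T).

Lemma embed_plus d k : raag_embeds_GL e F d -> raag_embeds_GL e F (d + k).
Proof.
case=> A [Au Ac Af].
pose B x : 'M[F]_(d + k) := block_mx (A x) 0 0 1%:M.
have invB x : invmx (B x) = block_mx (invmx (A x)) 0 0 1%:M.
  apply: inv_uniq; rewrite /B mulmx_block !mulmx0 !mul0mx !addr0 !add0r mulmx1.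
  by rewrite mulmxV // -scalar_mx_block.
have evB w : mx_eval B w = block_mx (mx_eval A w) 0 0 1%:M.
  elim: w => [|p w IH]; first by rewrite /mx_eval /= -scalar_mx_block.
  rewrite !mx_eval_cons IH; case: p.2.
    by rewrite /B mulmx_block !mulmx0 !mul0mx !addr0 !add0r mulmx1.
  by rewrite invB mulmx_block !mulmx0 !mul0mx !addr0 !add0r mulmx1.
exists B; split.
- by move=> x; rewrite unitmxE /B det_ublock det1 mulr1 -unitmxE.
- by move=> x y exy; rewrite /B !mulmx_block !mulmx0 !mul0mx !addr0 !add0r mulmx1 Ac.
- move=> w; rewrite evB scalar_mx_block => /eq_block_mx [h _ _ _].
  exact: Af.
Qed.

Lemma embed3 d : (d <= 3)%N -> raag_embeds_GL e F d -> raag_embeds_GL e F 3.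
Proof.
move=> hd /(embed_plus (3 - d)); by rewrite subnKC.
Qed.
End Embed.


Section Core.
Variable F : fieldType.
Local Notation M3 := 'M[F]_3.
Local Notation rV := 'rV[F]_3.

Definition i0 : 'I_3 := ord0.
Definition i1 : 'I_3 := lift ord0 ord0.
Definition i2 : 'I_3 := ord_max.

Lemma ord3_cases (j : 'I_3) : [\/ j = i0, j = i1 | j = i2].
Proof.
case: j => [[|[|[|k]]] hj]; last by [].
- by constructor 1; apply: val_inj.
- by constructor 2; apply: val_inj.
- by constructor 3; apply: val_inj.
Qed.

Lemma sum3 (V : zmodType) (f : 'I_3 -> V) : \sum_(j < 3) f j = f i0 + f i1 + f i2.
Proof.
rewrite !big_ord_recl big_ord0 addr0 addrA.
by congr (_ + _ + f _); apply: val_inj.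
Qed.

Definition kry (M : M3) (v : rV) : M3 := \matrix_(i < 3) (v *m M ^+ i).

Lemma kry_mul (c : rV) M v : c *m kry M v = v *m \sum_(j < 3) c 0 j *: M ^+ j.
Proof.
rewrite mulmx_sum_row mulmx_sumr; apply: eq_bigr => j _.
by rewrite rowK scalemxAr.
Qed.

Lemma kry_unit M v : (forall c : rV, v *m (\sum_(j < 3) c 0 j *: M ^+ j) = 0 -> c = 0) ->
  kry M v \in unitmx.
Proof.
move=> H; rewrite -row_free_unit -kermx_eq0; apply/eqP/row_matrixP => i.
rewrite row0; apply: H; rewrite -kry_mul -row_mul.
by rewrite mulmx_ker row0.
Qed.

Lemma kry_unit3 M v : (forall a b c : F, a *: v + b *: (v *m M) + c *: (v *m M *m M) = 0 ->
     [/\ a = 0, b = 0 & c = 0]) -> kry M v \in unitmx.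
Proof.
move=> H; apply: kry_unit => c.
rewrite sum3 !mulmxDr -!scalemxAr expr0 expr1 expr2 mulmx1 -mulmxE mulmxA.
case/H => h0 h1 h2; apply/rowP => j; rewrite mxE.
by case: (ord3_cases j) => ->.
Qed.

Lemma comm_powers (M X : M3) : M *m X = X *m M -> forall j, M ^+ j *m X = X *m M ^+ j.
Proof.
move=> h; elim=> [|j IH]; first by rewrite expr0 mulmx1 mul1mx.
by rewrite exprS -mulmxE -mulmxA IH !mulmxA h.
Qed.

Lemma comm_poly (M X : M3) (c : rV) : M *m X = X *m M ->
  (\sum_(j < 3) c 0 j *: M ^+ j) *m X = X *m (\sum_(j < 3) c 0 j *: M ^+ j).
Proof.
move=> h; rewrite mulmx_suml mulmx_sumr; apply: eq_bigr => j _.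
by rewrite -scalemxAl -scalemxAr comm_powers.
Qed.

Lemma cyclic_comm (M P Q : M3) v : kry M v \in unitmx ->
  M *m P = P *m M -> M *m Q = Q *m M -> P *m Q = Q *m P.
Proof.
move=> uK hP hQ; set K := kry M v.
pose c : rV := v *m Q *m invmx K.
pose pQ := \sum_(j < 3) c 0 j *: M ^+ j.
have vpQ : v *m pQ = v *m Q by rewrite -kry_mul mulmxKV.
have hMp : M *m pQ = pQ *m M.
  by rewrite /pQ (comm_poly c (erefl (M *m M))).
have KQ : K *m Q = K *m pQ.
  apply/row_matrixP => i; rewrite !row_mul rowK.
  by rewrite -!mulmxA (comm_powers hQ) (comm_powers hMp) !mulmxA vpQ.
have -> : Q = pQ by rewrite -(mulKmx uK Q) KQ mulKmx.
by rewrite comm_poly.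
Qed.

Lemma hmx_poly (N : M3) (c : rV) :
  horner_mx N (\poly_(i < 3) c 0 (inord i)) = \sum_(j < 3) c 0 j *: N ^+ j.
Proof.
rewrite poly_def linear_sum; apply: eq_bigr => j _.
by rewrite linearZ /= rmorphXn /= horner_mx_X inord_val.
Qed.

Lemma poly_c_eq0 (c : rV) : \poly_(i < 3) c 0 (inord i) = 0 -> c = 0.
Proof.
move=> H; apply/rowP => j; have := congr1 (fun p : {poly F} => p`_j) H.
by rewrite coef_poly ltn_ord inord_val coef0 !mxE.
Qed.

Lemma lin_root (q : {poly F}) : size q = 2%N -> exists x, root q x.
Proof.
move=> sq; have q1 : q`_1 != 0.
  have : lead_coef q != 0 by rewrite lead_coef_eq0 -size_poly_eq0 sq.
  by rewrite lead_coefE sq.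
exists (- q`_0 / q`_1); rewrite /root horner_coef sq !big_ord_recl big_ord0 /=.
rewrite expr0 mulr1 addr0 expr1 /bump /=.
by rewrite mulrC divfK // addrN.
Qed.

Lemma noroot_coprime (chi p : {poly F}) : size chi = 4%N -> (forall x, ~~ root chi x) ->
  p != 0 -> (size p <= 3)%N -> coprimep p chi.
Proof.
move=> schi nr p0 sp; rewrite coprimep_def.
set g := gcdp p chi.
have gp : g %| p := dvdp_gcdl p chi.
have gc : g %| chi := dvdp_gcdr p chi.
have g0 : g != 0 by rewrite gcdp_eq0 negb_and p0.
have sg : (size g <= 3)%N by apply: leq_trans (dvdp_leq p0 gp) sp.
have sg1 : (0 < size g)%N by rewrite size_poly_gt0.
have chi0 : chi != 0 by rewrite -size_poly_eq0 schi.
case: (ltngtP (size g) 2) => hg.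
- by apply/eqP; lia.
- have hg3 : size g = 3%N by lia.
  set h := chi %/ g.
  have hchi : h * g = chi := divpK gc.
  have h0 : h != 0 by apply: contra chi0 => /eqP h0; rewrite -hchi h0 mul0r.
  have : size chi = (size h + size g).-1 by rewrite -hchi size_mul.
  rewrite schi hg3 => sh.
  have [x rx] : exists x, root h x.
    apply: lin_root; move: sh; rewrite addnS /= => e; apply/eqP; by rewrite -(eqn_add2r 2) -e.
  by have := nr x; rewrite -hchi rootM rx.
- have [x rx] := lin_root hg.
  by have := nr x; rewrite (root_dvdp gc rx).
Qed.

Lemma coprime_unit (N : M3) p : coprimep p (char_poly N) -> horner_mx N p \in unitmx.
Proof.
case/Bezout_coprimepP => [[u v]] /= h.
have /size_poly1P [c c0 hc] : size (u * p + v * char_poly N) == 1%N.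
  by rewrite (eqp_size h) size_poly1.
have := congr1 (horner_mx N) hc.
rewrite rmorphD !rmorphM /= Cayley_Hamilton mulr0 addr0 horner_mx_C => hc'.
have : (c^-1 *: horner_mx N u) *m horner_mx N p = 1%:M.
  by rewrite -scalemxAl mulmxE hc' scale_scalar_mx mulVf.
by case/mulmx1_unit.
Qed.

Lemma caseA (N : M3) : (forall x, ~~ root (char_poly N) x) -> kry N (delta_mx 0 0) \in unitmx.
Proof.
move=> nr; apply: kry_unit => c H.
apply: poly_c_eq0; apply/eqP; apply: contraT => pc0.
have u := coprime_unit (noroot_coprime (size_char_poly N) nr pc0 (size_poly _ _)).
move: H; rewrite -hmx_poly => /(canRL (mulmxK u)); rewrite mul0mx => /rowP /(_ 0).
by rewrite !mxE eqxx /= => /eqP; rewrite oner_eq0.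
Qed.

Lemma scal0 : (0 : F)%:M = 0 :> M3.
Proof. by apply/matrixP => i j; rewrite !mxE mul0rn. Qed.

Lemma rank1_fact (A : M3) : (\rank A <= 1)%N -> exists (u : 'cV[F]_3) (w : rV), A = u *m w.
Proof.
move=> hA; have [-> | A0] := eqVneq A 0; first by exists 0, 0; rewrite mul0mx.
have [i ri] : exists i, row i A != 0.
  case: (classic (exists i, row i A != 0)) => // hn.
  case/negP: A0; apply/eqP/row_matrixP => i.
  by rewrite row0; apply/eqP; apply: contraT => h; case: hn; exists i.
have rA : \rank A = 1%N.
  by apply/eqP; rewrite eqn_leq hA lt0n mxrank_eq0.
have : (A <= row i A)%MS.
  by rewrite -(mxrank_leqif_sup (row_sub i A)) rank_rV ri rA.
by case/submxP => D ->; exists D, (row i A).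
Qed.

Lemma rank_prod0 m (A : 'M[F]_(m, 3)) (B : M3) : A *m B = 0 -> (\rank A + \rank B <= 3)%N.
Proof.
move=> h; have : (A <= kermx B)%MS by rewrite sub_kermx h.
move/mxrankS; rewrite mxrank_ker => h2.
have := rank_leq_col B; lia.
Qed.

Lemma rank2_of_indep (a b : rV) : (forall s t : F, s *: a + t *: b = 0 -> s = 0 /\ t = 0) ->
  \rank (col_mx a b) = 2%N.
Proof.
move=> H; apply/eqP; rewrite -[2%N]/(1 + 1)%N; apply/eqP.
have : row_free (col_mx a b); last by move/eqP.
rewrite -kermx_eq0; apply/eqP/row_matrixP => i; rewrite row0.
set u := row i _.
have hu : u *m col_mx a b = 0 by rewrite -row_mul mulmx_ker row0.
rewrite -[u]hsubmxK in hu *.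
rewrite mul_row_col in hu.
rewrite [lsubmx u]mx11_scalar [rsubmx u]mx11_scalar !mul_scalar_mx in hu *.
case: (H _ _ hu) => -> ->.
by rewrite (_ : (0 : F)%:M = 0) ?row_mx0 //; apply/matrixP => p q; rewrite !mxE mul0rn.
Qed.

Lemma rank1_prop (A : M3) (x x' : rV) : (\rank A <= 1)%N -> (x <= A)%MS -> (x' <= A)%MS ->
  x != 0 -> exists c : F, x' = c *: x.
Proof.
move=> hA hx hx' x0.
have : (A <= x)%MS.
  rewrite -(mxrank_leqif_sup hx) rank_rV x0; apply/eqP.
  have : (\rank x <= \rank A)%N by apply: mxrankS.
  by rewrite rank_rV x0; lia.
move=> hAx; have /submxP [D ->] : (x' <= x)%MS by apply: submx_trans hAx.
by exists (D 0 0); rewrite {1}[D]mx11_scalar mul_scalar_mx.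
Qed.

Definition Eig (M : M3) (u : rV) := u = 0 \/ exists mu : F, u *m M = mu *: u.

Lemma scal_cancel (a b : F) (u : rV) : u != 0 -> a *: u = b *: u -> a = b.
Proof.
move=> u0 /eqP; rewrite -subr_eq0 -scalerBl scaler_eq0 (negbTE u0) orbF subr_eq0.
by move/eqP.
Qed.

Lemma pair_eig (M : M3) (a b : rV) : Eig M a -> Eig M b -> Eig M (a + b) ->
  exists mu : F, a *m M = mu *: a /\ b *m M = mu *: b.
Proof.
case=> [-> | [al ha]].
  case=> [-> | [be hb]] _; first by exists 0; rewrite mul0mx scaler0.
  by exists be; rewrite mul0mx scaler0.
case=> [-> _ | [be hb]]; first by exists al; rewrite mul0mx scaler0.
have [-> | a0] := eqVneq a 0; first by exists be; rewrite mul0mx scaler0.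
have [-> | b0] := eqVneq b 0; first by exists al; rewrite mul0mx scaler0.
case=> [hab | [ga hg]].
  have hb' : b = - a by apply/eqP; rewrite -addr_eq0 addrC hab.
  by exists al; split => //; rewrite hb' mulNmx ha scalerN.
rewrite mulmxDl ha hb !scalerDr in hg.
have e1 : (al - ga) *: a = (ga - be) *: b.
  have hal : al *: a = ga *: a + ga *: b - be *: b by rewrite -hg addrK.
  by rewrite !scalerBl; apply/eqP; rewrite subr_eq hal [X in _ == X]addrC addrA.
have [hag | hag] := eqVneq al ga.
  move: e1; rewrite hag subrr scale0r => /esym /eqP; rewrite scaler_eq0 (negbTE b0) orbF.
  by rewrite subr_eq0 => /eqP hgb; exists al; rewrite ha hb -hgb -hag.
have ha' : a = ((ga - be) / (al - ga)) *: b.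
  by rewrite mulrC -scalerA -e1 scalerA mulVf ?scale1r // subr_eq0.
exists be; split => //.
by rewrite {1}ha' -scalemxAl hb scalerA mulrC -scalerA -ha'.
Qed.

Lemma scalD (a b : F) : (a + b)%:M = a%:M + b%:M :> M3.
Proof. by apply/matrixP => i j; rewrite !mxE mulrnDl. Qed.

Definition indep2 (a b : rV) := forall s t : F, s *: a + t *: b = 0 -> s = 0 /\ t = 0.

Lemma not_indep_eig (M : M3) u : ~ indep2 u (u *m M) -> Eig M u.
Proof.
move=> h; case: (classic (Eig M u)) => // hE; exfalso; apply: h => s t hst.
have [t0 | t0] := eqVneq t 0.
  move: hst; rewrite t0 scale0r addr0 => /eqP; rewrite scaler_eq0 => /orP [/eqP -> //|/eqP u0].
  by case: hE; left.
case: hE; right; exists (- (s / t)).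
have h1 : t *: (u *m M) = - (s *: u) by apply/eqP; rewrite -addr_eq0 addrC hst.
by rewrite -[LHS]scale1r -(mulVf t0) -scalerA h1 scalerN scalerA mulrC scaleNr.
Qed.

Lemma B1_main (M : M3) : (forall x : rV, ~ indep2 (x *m M) (x *m M *m M)) ->
  exists mu : F, M *m M = mu *: M.
Proof.
move=> H.
have E : forall x : rV, Eig M (x *m M) by move=> x; apply: not_indep_eig.
have P : forall i j, exists mu : F, row i M *m M = mu *: row i M /\ row j M *m M = mu *: row j M.
  move=> i j; apply: pair_eig; rewrite ?rowE; try exact: E.
  by rewrite -mulmxDl; apply: E.
case: (classic (exists p, row p M != 0)) => [[p hp] | h0].
  have [mu0 [h1 _]] := P p p.
  exists mu0; apply/row_matrixP => j; rewrite row_mul.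
  have [mu' [h2 h3]] := P p j.
  have e : mu' = mu0 by apply: (scal_cancel hp); rewrite -h1 -h2.
  rewrite h3 e; apply/rowP => q; by rewrite !mxE.
exists 0; rewrite scale0r.
have M0 : M = 0.
  apply/row_matrixP => j; rewrite row0; apply/eqP; apply: contraT => hj.
  by case: h0; exists j.
by rewrite M0 mul0mx.
Qed.

Lemma B1cyc (M : M3) (k x : rV) : k != 0 -> k *m M = 0 ->
  (forall y : rV, y *m M *m M = 0 -> y *m M = 0) ->
  indep2 (x *m M) (x *m M *m M) -> kry M (k + x *m M) \in unitmx.
Proof.
move=> k0 hk hB hi; apply: kry_unit3 => a b c.
rewrite !mulmxDl hk !mul0mx !add0r.
set u := x *m M.
have ew : a *: (k + u) + b *: (u *m M) + c *: (u *m M *m M) =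
   a *: k + (a *: x + b *: (x *m M) + c *: (x *m M *m M)) *m M.
  rewrite !mulmxDl -!scalemxAl /u; apply/rowP => j; rewrite !mxE; ring.
rewrite ew => E.
have a0 : a = 0.
  apply/eqP; apply: contraT => a0; case/negP: k0; apply/eqP.
  set y := (a *: x + b *: (x *m M) + c *: (x *m M *m M)) in E.
  have hk' : k = (- a^-1 *: y) *m M.
    rewrite -scalemxAl; apply/rowP => j; move/rowP: E => /(_ j); rewrite !mxE => E.
    apply: (mulfI a0); rewrite mulrA mulrN divff // mulN1r; apply/eqP.
    by rewrite -addr_eq0 E.
  by rewrite hk'; apply: hB; rewrite -hk' hk.
rewrite a0 in E.
have hv : (b *: x + c *: (x *m M)) *m M *m M = 0.
  rewrite -E !mulmxDl -!scalemxAl /u; apply/rowP => j; rewrite !mxE; ring.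
have := hB _ hv; rewrite mulmxDl -!scalemxAl -/u => /hi [-> ->].
by [].
Qed.

Lemma caseB2 (M : M3) (y : rV) : y *m M *m M = 0 -> y *m M != 0 ->
  (\rank M <= 1)%N \/ exists v, kry M v \in unitmx.
Proof.
move=> hy k0; set k := y *m M in k0.
have hkM : k *m M = 0 by [].
have [MM0 | MM0] := eqVneq (M *m M) 0.
  by left; have := rank_prod0 MM0; lia.
have [p hp] : exists p : 'I_3, (delta_mx 0 p : rV) *m (M *m M) != 0.
  case: (classic (exists p : 'I_3, (delta_mx 0 p : rV) *m (M *m M) != 0)) => // hn.
  case/negP: MM0; apply/eqP/row_matrixP => j; rewrite row0 rowE.
  by apply/eqP; apply: contraT => hj; case: hn; exists j.
right.
have [M3z | M3z] := eqVneq (M *m M *m M) 0.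
  exists (delta_mx 0 p); apply: kry_unit3 => a b c E.
  set w := delta_mx 0 p in hp E *.
  have e3 : w *m M *m M *m M = 0 by rewrite -!mulmxA (mulmxA M) M3z mulmx0.
  have e4 : w *m M *m M *m M *m M = 0 by rewrite e3 mul0mx.
  have E2 := congr1 (fun X => X *m M *m M) E.
  rewrite /= !mul0mx !mulmxDl -!scalemxAl e4 e3 !scaler0 !addr0 in E2.
  move/eqP: E2; rewrite scaler_eq0 -mulmxA (negbTE hp) orbF => /eqP a0.
  rewrite a0 scale0r add0r in E.
  have E1 := congr1 (fun X => X *m M) E.
  rewrite /= !mul0mx !mulmxDl -!scalemxAl e3 scaler0 addr0 in E1.
  move/eqP: E1; rewrite scaler_eq0 -mulmxA (negbTE hp) orbF => /eqP b0.
  rewrite b0 scale0r add0r in E.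
  by move/eqP: E; rewrite scaler_eq0 -mulmxA (negbTE hp) orbF => /eqP c0.
have [q hq] : exists q : 'I_3, (delta_mx 0 q : rV) *m (M *m M *m M) != 0.
  case: (classic (exists q : 'I_3, (delta_mx 0 q : rV) *m (M *m M *m M) != 0)) => // hn.
  case/negP: M3z; apply/eqP/row_matrixP => j; rewrite row0 rowE.
  by apply/eqP; apply: contraT => hj; case: hn; exists j.
set w := delta_mx 0 q in hq.
set yy := w *m (M *m M).
have hyyM : yy *m M != 0 by rewrite /yy -mulmxA.
have yy0 : yy != 0 by apply: contraNneq hyyM => ->; rewrite mul0mx.
have rMM : (\rank (M *m M) <= 1)%N.
  have h0 : col_mx k y *m (M *m M) = 0.
    by rewrite mul_col_mx mulmxA hkM mul0mx mulmxA hy col_mx0.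
  have := rank_prod0 h0.
  rewrite rank2_of_indep; first lia.
  move=> s t hst; have := congr1 (mulmx^~ M) hst.
  rewrite /= mulmxDl -!scalemxAl hkM scaler0 add0r -/k mul0mx.
  move/eqP; rewrite scaler_eq0 (negbTE k0) orbF => /eqP t0.
  by move: hst; rewrite t0 scale0r addr0 => /eqP; rewrite scaler_eq0 (negbTE k0) orbF => /eqP.
have [mu hmu] : exists mu : F, yy *m M = mu *: yy.
  apply: (rank1_prop rMM) => //; first exact: submxMl.
  by rewrite /yy -mulmxA -(mulmxA M M M) mulmxA submxMl.
have mu0 : mu != 0 by apply: contraNneq hyyM => hm; rewrite hmu hm scale0r.
exists (y + yy); apply: kry_unit3 => a b c E.
have h1 : (y + yy) *m M = k + mu *: yy by rewrite mulmxDl hmu.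
have h2 : (y + yy) *m M *m M = (mu * mu) *: yy.
  by rewrite h1 mulmxDl hkM add0r -scalemxAl hmu scalerA.
have h3 : (mu * mu) *: yy *m M = (mu * mu * mu) *: yy.
  by rewrite -scalemxAl hmu scalerA.
have h4 : (mu * mu * mu) *: yy *m M = (mu * mu * mu * mu) *: yy.
  by rewrite -scalemxAl hmu scalerA.
rewrite h2 h1 in E.
have E1 : a *: k + (a * mu + b * mu * mu + c * mu * mu * mu) *: yy = 0.
  have : (a *: (y + yy) + b *: (k + mu *: yy) + c *: ((mu * mu) *: yy)) *m M = 0.
    by rewrite E mul0mx.
  rewrite !mulmxDl -!scalemxAl !mulmxDl -!scalemxAl -/k hkM hmu => h.
  rewrite -h; apply/rowP => j; rewrite !mxE; ring.
have E2 : (a * mu * mu + b * mu * mu * mu + c * mu * mu * mu * mu) *: yy = 0.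
  have : (a *: k + (a * mu + b * mu * mu + c * mu * mu * mu) *: yy) *m M = 0.
    by rewrite E1 mul0mx.
  rewrite !mulmxDl -!scalemxAl hkM hmu => h.
  rewrite -h; apply/rowP => j; rewrite !mxE; ring.
have s0 : a + b * mu + c * (mu * mu) = 0.
  have : (mu * mu * (a + b * mu + c * (mu * mu))) *: yy = 0.
    rewrite -E2; congr (_ *: _); ring.
  move/eqP; rewrite scaler_eq0 (negbTE yy0) orbF mulf_eq0 mulf_eq0 (negbTE mu0) /=.
  by move/eqP.
have a0 : a = 0.
  have : a *: k = 0.
    rewrite -E1; apply/rowP => j; rewrite !mxE.
    have -> : a * mu + b * mu * mu + c * mu * mu * mu = mu * (a + b * mu + c * (mu * mu)).
      by ring.
    by rewrite s0 mulr0 mul0r addr0.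
  by move/eqP; rewrite scaler_eq0 (negbTE k0) orbF => /eqP.
have b0 : b = 0.
  have : b *: k = 0.
    clearbody k yy; rewrite -E; apply/rowP => j; rewrite !mxE a0.
    have -> : b * k 0 j = b * k 0 j + (a + b * mu + c * (mu * mu)) * yy 0 j.
      by rewrite s0 mul0r addr0.
    rewrite a0; ring.
  by move/eqP; rewrite scaler_eq0 (negbTE k0) orbF => /eqP.
have c0 : c = 0.
  move: s0; rewrite a0 b0 mul0r !add0r => /eqP.
  by rewrite mulf_eq0 mulf_eq0 (negbTE mu0) /= orbF => /eqP.
by [].
Qed.

Lemma caseB (M : M3) (k : rV) : k != 0 -> k *m M = 0 ->
  (exists mu : F, (\rank (M - mu%:M)%R <= 1)%N) \/ (exists v, kry M v \in unitmx).
Proof.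
move=> k0 hk.
case: (classic (exists y : rV, y *m M *m M = 0 /\ y *m M != 0)) => [[y [h1 h2]] | hB].
  case: (caseB2 h1 h2) => [r | c]; last by right.
  by left; exists 0; rewrite scal0 subr0.
have hB' : forall y : rV, y *m M *m M = 0 -> y *m M = 0.
  move=> y hy; apply/eqP; apply: contraT => hy2; case: hB; by exists y.
case: (classic (exists x : rV, indep2 (x *m M) (x *m M *m M))) => [[x hx] | hn].
  by right; exists (k + x *m M); apply: B1cyc.
have [mu hmu] : exists mu : F, M *m M = mu *: M.
  apply: B1_main => x hx; case: hn; by exists x.
left.
have h0 : M *m (M - mu%:M) = 0 by rewrite mulmxBr hmu mul_mx_scalar subrr.
have := rank_prod0 h0.
case: (leqP (\rank M) 1) => hr.
  by move=> _; exists 0; rewrite scal0 subr0.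
by move=> h; exists mu; lia.
Qed.

Lemma L1 (N : M3) : (exists l (u : 'cV[F]_3) (w : rV), N = l%:M + u *m w) \/
  (exists l v, kry (N - l%:M) v \in unitmx).
Proof.
case: (classic (exists x, root (char_poly N) x)) => [[l rl] | nr].
  rewrite -eigenvalue_root_char in rl; case/eigenvalueP: rl => k hk k0.
  have hk' : k *m (N - l%:M) = 0 by rewrite mulmxBr hk mul_mx_scalar subrr.
  case: (caseB k0 hk') => [[mu hmu] | [v hv]]; last by right; exists l, v.
  left; have [u [w huw]] := rank1_fact hmu.
  have e : N - l%:M - mu%:M = N - (l + mu)%:M by rewrite scalD opprD addrA.
  rewrite e in huw; exists (l + mu), u, w.
  by rewrite -huw addrC subrK.
right; exists 0, (delta_mx 0 0); rewrite scal0 subr0; apply: caseA.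
by move=> x; apply/negP => rx; case: nr; exists x.
Qed.

Lemma shift_comm (N P : M3) (l : F) : N *m P = P *m N -> (N - l%:M) *m P = P *m (N - l%:M).
Proof. by move=> h; rewrite mulmxBl mulmxBr h scalar_mxC. Qed.

Lemma L1c (N P Q : M3) : N *m P = P *m N -> N *m Q = Q *m N -> P *m Q <> Q *m P ->
  exists l (u : 'cV[F]_3) (w : rV), N = l%:M + u *m w.
Proof.
move=> hP hQ hPQ; case: (L1 N) => // [[l [v hv]]].
by case: hPQ; apply: (cyclic_comm hv); apply: shift_comm.
Qed.

Local Notation cV := 'cV[F]_3.
Definition ip (y : rV) (u : cV) : F := (y *m u) 0 0.

Lemma ipE (y : rV) (u : cV) : y *m u = (ip y u)%:M.
Proof. exact: mx11_scalar. Qed.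

Lemma outer_mul (u x : cV) (w y : rV) : (u *m w) *m (x *m y) = ip w x *: (u *m y).
Proof. by rewrite mulmxA -(mulmxA u) ipE mul_mx_scalar -scalemxAl. Qed.

Lemma row_outer (y : rV) (x : cV) (w : rV) : y *m (x *m w) = ip y x *: w.
Proof. by rewrite mulmxA ipE mul_scalar_mx. Qed.

Lemma col_outer (u : cV) (y : rV) (x : cV) : (u *m y) *m x = ip y x *: u.
Proof. by rewrite -mulmxA ipE mul_mx_scalar. Qed.

Lemma tr_outer (u : cV) (w : rV) : \tr (u *m w) = ip w u.
Proof. by rewrite mxtrace_mulC /mxtrace big_ord1. Qed.

Lemma outer_neq0 (u : cV) (w : rV) : u *m w != 0 -> u != 0 /\ w != 0.
Proof.
move=> h; split; apply: contraNneq h => ->; by rewrite ?mul0mx ?mulmx0.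
Qed.

Lemma outer_nz (u : cV) (w : rV) : u != 0 -> w != 0 -> u *m w != 0.
Proof.
move=> u0 w0.
have [i hi] : exists i, u i 0 != 0.
  case: (classic (exists i, u i 0 != 0)) => // hn; case/negP: u0; apply/eqP/matrixP => i' j'.
  rewrite (ord1 j') mxE; apply/eqP; apply: contraT => h; case: hn; by exists i'.
have [j hj] : exists j, w 0 j != 0.
  case: (classic (exists j, w 0 j != 0)) => // hn; case/negP: w0; apply/eqP/matrixP => i' j'.
  rewrite (ord1 i') mxE; apply/eqP; apply: contraT => h; case: hn; by exists j'.
apply/eqP => /matrixP /(_ i j); rewrite !mxE big_ord1 => /eqP.
by rewrite mulf_eq0 (negbTE hi) (negbTE hj).
Qed.

Lemma ip_tr (w : rV) (x : cV) : ip w x = ip x^T w^T.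
Proof. by rewrite /ip -(trmx_mul w x) [in RHS]mxE. Qed.

Lemma RC (u x : cV) (w y : rV) : u *m w != 0 -> x *m y != 0 ->
  (x *m y) *m (u *m w) = (u *m w) *m (x *m y) ->
  (ip y u = 0 /\ ip w x = 0) \/ exists ka : F, x *m y = ka *: (u *m w).
Proof.
move=> R0 S0; have [u0 w0] := outer_neq0 R0; have [x0 y0] := outer_neq0 S0.
rewrite !outer_mul => E.
have [al0 | al0] := eqVneq (ip y u) 0.
  left; split => //; move: E; rewrite al0 scale0r => /esym/eqP.
  by rewrite scaler_eq0 (negbTE (outer_nz u0 y0)) orbF => /eqP.
right.
have [be0 | be0] := eqVneq (ip w x) 0.
  move: E; rewrite be0 scale0r => /eqP; rewrite scaler_eq0 (negbTE al0) /=.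
  by rewrite (negbTE (outer_nz x0 w0)).
have Ey := congr1 (fun X => y *m X) E.
have Ex := congr1 (fun X => X *m x) E.
rewrite /= -!scalemxAr -!scalemxAl !row_outer !col_outer in Ey Ex.
have hy : y = (ip y x / ip w x) *: w.
  apply: (scalerI al0); apply: (scalerI be0).
  move: Ey; rewrite !scalerA mulrC => <-; congr (_ *: _).
  by field; rewrite be0.
have hx : x = (ip y x / ip y u) *: u.
  apply: (scalerI be0); move: Ex; rewrite !scalerA => Ex.
  apply: (scalerI al0); rewrite !scalerA.
  have -> : ip y u * (ip w x * (ip y x / ip y u)) = ip w x * ip y x.
    by field; rewrite al0.
  by rewrite -Ex mulrC.
exists ((ip y x / ip y u) * (ip y x / ip w x)).
have -> : x *m y = ((ip y x / ip y u) *: u) *m ((ip y x / ip w x) *: w) by rewrite -hx -hy.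
by rewrite -scalemxAl -scalemxAr scalerA.
Qed.

Lemma trZ m n (c : F) (A : 'M[F]_(m, n)) : (c *: A)^T = c *: A^T.
Proof. by apply/matrixP => i j; rewrite !mxE. Qed.

Lemma perp (p q : cV) (z z' : rV) : p != 0 -> (forall c : F, q != c *: p) ->
  ip z p = 0 -> ip z q = 0 -> ip z' p = 0 -> ip z' q = 0 -> z != 0 ->
  exists c : F, z' = c *: z.
Proof.
move=> p0 hq zp zq z'p z'q z0.
set P := row_mx p q.
have rP : \rank P = 2%N.
  rewrite -mxrank_tr tr_row_mx rank2_of_indep // => s t hst.
  have h : s *: p + t *: q = 0.
    apply: trmx_inj; rewrite trmx0 -hst; apply/matrixP => i j; by rewrite !mxE.
  have [t0 | t0] := eqVneq t 0.
    move: h; rewrite t0 scale0r addr0 => /eqP; rewrite scaler_eq0 (negbTE p0) orbF.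
    by move/eqP.
  case/negP: (hq (- (s / t))); apply/eqP.
  have h2 : t *: q = - (s *: p) by apply/eqP; rewrite -addr_eq0 addrC h.
  by rewrite -[LHS]scale1r -(mulVf t0) -scalerA h2 scalerN scalerA mulrC scaleNr.
have hz : forall z0 : rV, ip z0 p = 0 -> ip z0 q = 0 -> (z0 <= kermx P)%MS.
  move=> z1 h1 h2.
  have e0 : (0 : F)%:M = 0 :> 'M[F]_1 by apply/matrixP => a b; rewrite !mxE mul0rn.
  by rewrite sub_kermx mul_mx_row !ipE h1 h2 e0 row_mx0.
have rk : (\rank (kermx P) <= 1)%N by rewrite mxrank_ker rP.
exact: (rank1_prop rk (hz _ zp zq) (hz _ z'p z'q) z0).
Qed.

Lemma L2 (u1 u2 x1 x2 : cV) (w1 w2 y1 y2 : rV) :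
  (x1 *m y1) *m (u1 *m w1) = (u1 *m w1) *m (x1 *m y1) ->
  (x1 *m y1) *m (u2 *m w2) = (u2 *m w2) *m (x1 *m y1) ->
  (x2 *m y2) *m (u1 *m w1) = (u1 *m w1) *m (x2 *m y2) ->
  (x2 *m y2) *m (u2 *m w2) = (u2 *m w2) *m (x2 *m y2) ->
  (u1 *m w1) *m (u2 *m w2) <> (u2 *m w2) *m (u1 *m w1) ->
  (x1 *m y1) *m (x2 *m y2) <> (x2 *m y2) *m (x1 *m y1) ->
  (exists c : F, u2 = c *: u1) \/ (exists c : F, w2 = c *: w1).
Proof.
move=> c11 c12 c21 c22 nR nS.
have R10 : u1 *m w1 != 0 by apply: contra_not_neq nR => ->; rewrite mul0mx mulmx0.
have R20 : u2 *m w2 != 0 by apply: contra_not_neq nR => ->; rewrite mul0mx mulmx0.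
have S10 : x1 *m y1 != 0 by apply: contra_not_neq nS => ->; rewrite mul0mx mulmx0.
have S20 : x2 *m y2 != 0 by apply: contra_not_neq nS => ->; rewrite mul0mx mulmx0.
have key : forall (x : cV) (y : rV), x *m y != 0 ->
    (x *m y) *m (u1 *m w1) = (u1 *m w1) *m (x *m y) ->
    (x *m y) *m (u2 *m w2) = (u2 *m w2) *m (x *m y) ->
    [/\ ip y u1 = 0, ip w1 x = 0, ip y u2 = 0 & ip w2 x = 0].
  move=> x y S0 h1 h2.
  have prop : forall ka : F, x *m y = ka *: (u1 *m w1) \/ x *m y = ka *: (u2 *m w2) -> False.
    move=> ka hk; have ka0 : ka != 0.
      by apply: contraNneq S0 => k0; case: hk => ->; rewrite k0 scale0r.
    case: hk => hk; [move: h2 | move: h1]; rewrite hk -scalemxAl -scalemxAr => /(scalerI ka0).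
      by move=> h; apply: nR.
    by move=> h; apply: nR.
  case: (RC R10 S0 h1) => [[a1 a2] | [ka hk]]; last by case: (prop ka); left.
  case: (RC R20 S0 h2) => [[a3 a4] | [ka hk]]; last by case: (prop ka); right.
  by [].
have [o1 o2 o3 o4] := key _ _ S10 c11 c12.
have [o5 o6 o7 o8] := key _ _ S20 c21 c22.
case: (classic (exists c : F, u2 = c *: u1)) => [h | hu]; first by left.
case: (classic (exists c : F, w2 = c *: w1)) => [h | hw]; first by right.
exfalso.
have [u10 w10] := outer_neq0 R10.
have [x10 y10] := outer_neq0 S10.
have [c hc] : exists c : F, y2 = c *: y1.
  apply: (perp u10 _ o1 o3 o5 o7 y10) => c; apply/eqP => h; apply: hu; by exists c.
have [d hd] : exists d : F, x2^T = d *: x1^T.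
  apply: (@perp w1^T w2^T).
  - by apply: contraNneq w10 => h; rewrite -(trmxK w1) h trmx0.
  - move=> d; apply/eqP => h; apply: hw; exists d.
    by rewrite -(trmxK w2) h trZ trmxK.
  - by rewrite -ip_tr.
  - by rewrite -ip_tr.
  - by rewrite -ip_tr.
  - by rewrite -ip_tr.
  - by apply: contraNneq x10 => h; rewrite -(trmxK x1) h trmx0.
have hx2 : x2 = d *: x1 by rewrite -(trmxK x2) hd trZ trmxK.
have hS2 : x2 *m y2 = (d * c) *: (x1 *m y1).
  by rewrite hx2 hc -scalemxAl -scalemxAr scalerA.
by apply: nS; rewrite hS2 -scalemxAl -scalemxAr.
Qed.
End Core.

Section Sig.
Variable F : fieldType.
Local Notation M3 := 'M[F]_3.
Variable S : M3 -> Prop.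
Variable mode : bool.
Hypothesis SD : forall N N', S N -> S N' -> S (N + N').
Hypothesis SZ : forall (c : F) N, S N -> S (c *: N).
Hypothesis law : forall N N', S N -> S N' ->
  N *m N' = if mode then \tr N *: N' else \tr N' *: N.

Lemma SM N N' : S N -> S N' -> S (N *m N').
Proof. by move=> h h'; rewrite law //; case: mode; apply: SZ. Qed.

Lemma law_tr N N' : S N -> S N' -> \tr (N *m N') = \tr N * \tr N'.
Proof. by move=> h h'; rewrite law //; case: mode; rewrite mxtraceZ // mulrC. Qed.

Lemma law_sq N : S N -> N *m N = \tr N *: N.
Proof. by move=> h; rewrite law //; case: mode. Qed.

Lemma law0 N N' : S N -> S N' -> \tr N = 0 -> \tr N' = 0 -> N *m N' = 0.
Proof. by move=> h h' t t'; rewrite law //; case: mode; rewrite ?t ?t' scale0r. Qed.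

Lemma expand (a b : F) (N1 N2 : M3) :
  (a%:M + N1) *m (b%:M + N2) = (a * b)%:M + (a *: N2 + b *: N1 + N1 *m N2).
Proof.
rewrite mulmxDl !mulmxDr !mul_scalar_mx mul_mx_scalar scale_scalar_mx.
by rewrite !addrA.
Qed.

Definition inSig (M : M3) := exists a N, [/\ S N, a != 0, a + \tr N != 0 & M = a%:M + N].
Definition in0 (K : M3) := exists N, [/\ S N, \tr N = 0 & K = 1%:M + N].

Lemma inv_uniq3 (X Y : M3) : X *m Y = 1%:M -> invmx X = Y.
Proof.
move=> h; have [uX _] := mulmx1_unit h.
by rewrite -[RHS](mulKmx uX) h mulmx1.
Qed.

Lemma sig_mul M1 M2 : inSig M1 -> inSig M2 -> inSig (M1 *m M2).
Proof.
case=> a [N1 [s1 a0 at0 ->]]; case=> b [N2 [s2 b0 bt0 ->]].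
exists (a * b), (a *: N2 + b *: N1 + N1 *m N2); split.
- by apply: SD; [apply: SD; apply: SZ | apply: SM].
- by rewrite mulf_neq0.
- rewrite !mxtraceD !mxtraceZ law_tr //.
  have -> : a * b + (a * \tr N2 + b * \tr N1 + \tr N1 * \tr N2) = (a + \tr N1) * (b + \tr N2) by ring.
  by rewrite mulf_neq0.
- exact: expand.
Qed.

Lemma sig_inv M : inSig M -> M \in unitmx /\ inSig (invmx M) /\ invmx M *m M = 1%:M.
Proof.
case=> a [N [s a0 at0 ->]].
set t := \tr N in at0 *.
set k := - (a * (a + t))^-1.
have h : (a%:M + N) *m (a^-1%:M + k *: N) = 1%:M.
  rewrite expand mulfV // -scalemxAr law_sq // -/t !scalerA -!scalerDl.
  have -> : a * k + a^-1 + k * t = 0 by rewrite /k; field; rewrite a0 at0.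
  by rewrite scale0r addr0.
have [uM _] := mulmx1_unit h.
split => //; rewrite (inv_uniq3 h); split; last by rewrite mulmx1C.
exists a^-1, (k *: N); split => //.
- exact: SZ.
- by rewrite invr_eq0.
- rewrite mxtraceZ -/t.
  have -> : a^-1 + k * t = (a + t)^-1 by rewrite /k; field; rewrite a0 at0.
  by rewrite invr_eq0.
Qed.

Lemma sig_comm M1 M2 : inSig M1 -> inSig M2 ->
  in0 (M1 *m M2 *m invmx M1 *m invmx M2).
Proof.
move=> h1 h2.
have [u1 _] := sig_inv h1; have [u2 _] := sig_inv h2.
case: h1 => a [N1 [s1 a0 at0 e1]]; case: h2 => b [N2 [s2 b0 bt0 e2]].
set D := N1 *m N2 - N2 *m N1.
have sD : S D by rewrite /D; apply: SD; [apply: SM | rewrite -scaleN1r; apply: SZ; apply: SM].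
have tD : \tr D = 0 by rewrite /D raddfB /= mxtrace_mulC subrr.
set Q := b *: N1 + a *: N2 + N2 *m N1.
have sQ : S Q by apply: SD; [apply: SD; apply: SZ | apply: SM].
have eP : M2 *m M1 = (a * b)%:M + Q.
  by rewrite e1 e2 expand mulrC.
have eM : M1 *m M2 = M2 *m M1 + D.
  rewrite e1 e2 !expand /D mulrC; apply/matrixP => i j.
  move: (N1 *m N2) (N2 *m N1) => X Y; rewrite !mxE; ring.
set del := if mode then a * b else a * b + \tr Q.
have del0 : del != 0.
  rewrite /del; case: mode; first by rewrite mulf_neq0.
  rewrite /Q !mxtraceD !mxtraceZ law_tr //.
  have -> : a * b + (b * \tr N1 + a * \tr N2 + \tr N2 * \tr N1) = (a + \tr N1) * (b + \tr N2) by ring.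
  by rewrite mulf_neq0.
have DP : D *m (M2 *m M1) = del *: D.
  rewrite eP mulmxDr mul_mx_scalar /del.
  have -> : D *m Q = if mode then 0 else \tr Q *: D.
    rewrite /D mulmxBl -!mulmxA.
    case hm : mode.
    - rewrite (law s2 sQ) (law s1 sQ) hm -!scalemxAr (law s1 sQ) (law s2 sQ) hm.
      by rewrite !scalerA mulrC subrr.
    - rewrite !mulmxA (law (SM s1 s2) sQ) (law (SM s2 s1) sQ) hm.
      by rewrite scalerBr.
  by case: mode; rewrite ?addr0 // scalerDl addrC.
exists (del^-1 *: D); split.
- exact: SZ.
- by rewrite mxtraceZ tD mulr0.
have uP : M2 *m M1 \in unitmx by rewrite unitmx_mul u1 u2.
have -> : M1 *m M2 *m invmx M1 *m invmx M2 = M1 *m M2 *m invmx (M2 *m M1).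
  rewrite -!mulmxA; congr (_ *m (_ *m _)).
  apply: esym; apply: inv_uniq3.
  by rewrite -mulmxA (mulmxA M1) mulmxV // mul1mx mulmxV.
rewrite eM; apply: (canLR (mulmxK uP)).
by rewrite mulmxDl mul1mx -scalemxAl DP scalerA mulVf // scale1r.
Qed.

Lemma in0_comm K1 K2 : in0 K1 -> in0 K2 -> K1 *m K2 = K2 *m K1.
Proof.
case=> N [s t ->]; case=> N' [s' t' ->].
rewrite !mulmxDl !mulmxDr !mul1mx !mulmx1 (law0 s s') // (law0 s' s) //.
by rewrite !addr0 -!addrA (addrC N).
Qed.
End Sig.

Section CL.
Variable F : fieldType.
Local Notation M3 := 'M[F]_3.

Lemma comm_parts (g b : F) (S R : M3) :
  (g%:M + S) *m (b%:M + R) = (b%:M + R) *m (g%:M + S) -> S *m R = R *m S.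
Proof.
rewrite !expand mulrC => /addrI.
by rewrite (addrC (g *: R)) => /addrI.
Qed.

Lemma parts_comm (g b : F) (S R : M3) :
  S *m R = R *m S -> (g%:M + S) *m (b%:M + R) = (b%:M + R) *m (g%:M + S).
Proof. by move=> h; rewrite !expand mulrC h (addrC (g *: R)). Qed.

Lemma sig_of_unit (S : M3 -> Prop) (mode : bool)
  (law : forall N N', S N -> S N' -> N *m N' = if mode then \tr N *: N' else \tr N' *: N)
  (a : F) (N : M3) : S N -> (a%:M + N) \in unitmx -> (forall c, N <> c%:M) ->
  inSig S (a%:M + N).
Proof.
move=> sN u ns; exists a, N; split => //.
- apply/eqP => a0; rewrite a0 scal0 add0r in u.
  apply: (ns (\tr N)).
  by rewrite -[LHS](mulKmx u N) -[RHS](mulKmx u _) mul_mx_scalar (law_sq law sN).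
- apply/eqP => at0.
  have h : (a%:M + N) *m N = 0.
    by rewrite mulmxDl mul_scalar_mx (law_sq law sN) -scalerDl at0 scale0r.
  have N0 : N = 0 by rewrite -(mulKmx u N) h mulmx0.
  by apply: (ns 0); rewrite N0 scal0.
Qed.

Lemma CL (X1 X2 Y1 Y2 : M3) :
  X1 \in unitmx -> X2 \in unitmx -> Y1 \in unitmx -> Y2 \in unitmx ->
  X1 *m Y1 = Y1 *m X1 -> X1 *m Y2 = Y2 *m X1 ->
  X2 *m Y1 = Y1 *m X2 -> X2 *m Y2 = Y2 *m X2 ->
  [\/ X1 *m X2 = X2 *m X1, Y1 *m Y2 = Y2 *m Y1 |
    (Y1 *m Y2 *m invmx Y1 *m invmx Y2) *m (Y1 *m invmx Y2 *m invmx Y1 *m Y2) =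
    (Y1 *m invmx Y2 *m invmx Y1 *m Y2) *m (Y1 *m Y2 *m invmx Y1 *m invmx Y2)].
Proof.
move=> uX1 uX2 uY1 uY2 c11 c12 c21 c22.
case: (classic (X1 *m X2 = X2 *m X1)) => hX; first by constructor 1.
case: (classic (Y1 *m Y2 = Y2 *m Y1)) => hY; first by constructor 2.
constructor 3.
have [b1 [u1 [w1 eY1]]] := L1c (esym c11) (esym c21) hX.
have [b2 [u2 [w2 eY2]]] := L1c (esym c12) (esym c22) hX.
have [g1 [x1 [y1 eX1]]] := L1c c11 c12 hY.
have [g2 [x2 [y2 eX2]]] := L1c c21 c22 hY.
have cp : forall X Y g b (S R : M3), X = g%:M + S -> Y = b%:M + R ->
    X *m Y = Y *m X -> S *m R = R *m S.
  by move=> X Y g b S R -> ->; apply: comm_parts.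
have d11 := cp _ _ _ _ _ _ eX1 eY1 c11.
have d12 := cp _ _ _ _ _ _ eX1 eY2 c12.
have d21 := cp _ _ _ _ _ _ eX2 eY1 c21.
have d22 := cp _ _ _ _ _ _ eX2 eY2 c22.
have nR : (u1 *m w1) *m (u2 *m w2) <> (u2 *m w2) *m (u1 *m w1).
  by move=> h; apply: hY; rewrite eY1 eY2; apply: parts_comm.
have nS : (x1 *m y1) *m (x2 *m y2) <> (x2 *m y2) *m (x1 *m y1).
  by move=> h; apply: hX; rewrite eX1 eX2; apply: parts_comm.
have nsc1 : forall c, u1 *m w1 <> c%:M.
  by move=> c h; apply: nR; rewrite h scalar_mxC.
have nsc2 : forall c, u2 *m w2 <> c%:M.
  by move=> c h; apply: nR; rewrite h scalar_mxC.
have fin : forall (S : M3 -> Prop) (mode : bool),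
    (forall N N', S N -> S N' -> S (N + N')) ->
    (forall (c : F) N, S N -> S (c *: N)) ->
    (forall N N', S N -> S N' -> N *m N' = if mode then \tr N *: N' else \tr N' *: N) ->
    S (u1 *m w1) -> S (u2 *m w2) ->
    (Y1 *m Y2 *m invmx Y1 *m invmx Y2) *m (Y1 *m invmx Y2 *m invmx Y1 *m Y2) =
    (Y1 *m invmx Y2 *m invmx Y1 *m Y2) *m (Y1 *m Y2 *m invmx Y1 *m invmx Y2).
  move=> S mode SD SZ law s1 s2.
  have h1 : inSig S Y1 by rewrite eY1; apply: (sig_of_unit law) => //; rewrite -eY1.
  have h2 : inSig S Y2 by rewrite eY2; apply: (sig_of_unit law) => //; rewrite -eY2.
  have [_ [h2' _]] := sig_inv SZ law h2.
  apply: (in0_comm law); first exact: (sig_comm SD SZ law h1 h2).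
  by have := sig_comm SD SZ law h1 h2'; rewrite invmxK.
case: (L2 d11 d12 d21 d22 nR nS) => [[c hc] | [c hc]].
- apply: (fin (fun N => exists w, N = u1 *m w) true).
  + by move=> N N' [w ->] [w' ->]; exists (w + w'); rewrite mulmxDr.
  + by move=> c' N [w ->]; exists (c' *: w); rewrite scalemxAr.
  + by move=> N N' [w ->] [w' ->]; rewrite outer_mul tr_outer.
  + by exists w1.
  + by exists (c *: w2); rewrite hc -scalemxAl scalemxAr.
- apply: (fin (fun N => exists x, N = x *m w1) false).
  + by move=> N N' [w ->] [w' ->]; exists (w + w'); rewrite mulmxDl.
  + by move=> c' N [w ->]; exists (c' *: w); rewrite scalemxAl.
  + by move=> N N' [w ->] [w' ->]; rewrite outer_mul tr_outer.
  + by exists u1.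
  + by exists (c *: u2); rewrite hc -scalemxAr scalemxAl.
Qed.
End CL.

Section Final.
Variables (F : fieldType) (T : finType) (e : rel T) (A : T -> 'M[F]_3).

Lemma eval4 p1 p2 p3 p4 : mx_eval A [:: p1; p2; p3; p4] =
  (if p1.2 then A p1.1 else invmx (A p1.1)) *m (if p2.2 then A p2.1 else invmx (A p2.1)) *m
  (if p3.2 then A p3.1 else invmx (A p3.1)) *m (if p4.2 then A p4.1 else invmx (A p4.1)).
Proof. by rewrite /mx_eval /= mulmx1 !mulmxA. Qed.

Lemma cc (P Q : 'M[F]_3) : P \in unitmx -> Q \in unitmx ->
  (P *m Q *m invmx P *m invmx Q) *m (Q *m P *m invmx Q *m invmx P) = 1%:M.
Proof.
move=> uP uQ; rewrite !mulmxA (mulmxKV uQ) (mulmxKV uP) (mulmxK uQ).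
by rewrite mulmxV.
Qed.

Hypothesis Au : forall x, A x \in unitmx.

Lemma eval_commw x y : A x *m A y = A y *m A x -> mx_eval A (commw x y) = 1%:M.
Proof.
move=> h; rewrite /commw eval4 /= h.
by rewrite (mulmxK (Au x)) mulmxV.
Qed.

Lemma eval_W2w x y :
  let Y1 := A x in let Y2 := A y in
  (Y1 *m Y2 *m invmx Y1 *m invmx Y2) *m (Y1 *m invmx Y2 *m invmx Y1 *m Y2) =
    (Y1 *m invmx Y2 *m invmx Y1 *m Y2) *m (Y1 *m Y2 *m invmx Y1 *m invmx Y2) ->
  mx_eval A (W2w x y) = 1%:M.
Proof.
move=> Y1 Y2 h; rewrite /W2w !mx_eval_cat !eval4 /= -/Y1 -/Y2.
have e1 : (Y1 *m Y2 *m invmx Y1 *m invmx Y2) *m (Y2 *m Y1 *m invmx Y2 *m invmx Y1) = 1%:M.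
  exact: (cc (Au x) (Au y)).
have e2 : (Y1 *m invmx Y2 *m invmx Y1 *m Y2) *m (invmx Y2 *m Y1 *m Y2 *m invmx Y1) = 1%:M.
  have uQ : invmx Y2 \in unitmx by rewrite unitmx_inv; apply: Au.
  by have := cc (Au x) uQ; rewrite invmxK.
rewrite mulmxA h -mulmxA (mulmxA (Y1 *m Y2 *m invmx Y1 *m invmx Y2)) e1 mul1mx.
exact: e2.
Qed.
End Final.

Local Close Scope ring_scope.

Theorem theorem3p2 (T : finType) (e : rel T) :
  simple_graph e -> raag_m_le e 3 -> ~ has_induced_square e.
Proof.
move=> [sym irr] [n [F [hn emb]]] [a [b [c [d [hu /and4P [eab ebc ecd eda] /andP [nac nbd]]]]]].
have [A [Au Ac Af]] := embed3 hn emb.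
have ac : a != c by move: hu; rewrite /= !inE; case: (a =P c) => //; rewrite orbT.
have bd : b != d by move: hu; rewrite /= !inE; case: (b =P d) => //; rewrite /= ?orbT andbF.
have nca : ~~ e c a by rewrite sym.
have ndb : ~~ e d b by rewrite sym.
have c11 : (A a *m A b = A b *m A a)%R := Ac _ _ eab.
have c12 : (A a *m A d = A d *m A a)%R by apply: Ac; rewrite sym.
have c21 : (A c *m A b = A b *m A c)%R by apply: Ac; rewrite sym.
have c22 : (A c *m A d = A d *m A c)%R := Ac _ _ ecd.
case: (CL (Au a) (Au c) (Au b) (Au d) c11 c12 c21 c22) => [h | h | h].
- apply: (commw_nontriv irr nac nca ac); apply: Af.
  exact: eval_commw.
- apply: (commw_nontriv irr nbd ndb bd); apply: Af.
  exact: eval_commw.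
- apply: (W2w_nontriv irr nbd ndb bd); apply: Af.
  exact: eval_W2w.
Qed.
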